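(* Let $\tau=(\xi_n)_{n\in\omega}$ be an infinite trace of tidy formulas. Then (1) there is a unique fixpoint formula $\xi=\eta x.\chi$ which occurs infinitely often on $\tau$ and satisfies $\xi\twoheadrightarrow_C^{\xi}\xi_n$ (i.e. $\xi_n\sqsubseteq_C\xi$) for cofinitely many $n$; (2) the number $\max\{\Omega_g(\phi)\mid \phi \text{ a fixpoint formula occurring infinitely often on }\tau\}$ is even iff $\eta=\nu$.
   Context: Syntax. Formulas of the modal $\mu$-calculus are taken in negation normal form: $\phi ::= \top \mid \bot \mid p \mid \neg p \mid x \mid \phi\land\phi\mid\phi\lor\phi\mid\Diamond\phi\mid\Box\phi\mid\mu x.\phi\mid\nu x.\phi$, where $p$ ranges over proposition letters and $x$ over an infinite supply of variables (which occur only positively). The formulas $\top,\bot,p,\neg p,x$ are atomic. $\mathrm{FV}(\phi)$ and $\mathrm{BV}(\phi)$ are the sets of free and bound variables of $\phi$; $\phi$ is tidy if $\mathrm{FV}(\phi)\cap\mathrm{BV}(\phi)=\varnothing$. A fixpoint formula is one of the form $\eta x.\chi$ with $\eta\in\{\mu,\nu\}$; it has type $\eta$, where $\mu$ counts as odd and $\nu$ as even parity, and $\bar\eta$ denotes the other operator. $\chi[\xi/x]$ is the result of replacing every free occurrence of $x$ in $\chi$ by $\xi$; $\xi$ is free for $x$ in $\chi$ if no free variable of $\xi$ becomes bound in $\chi[\xi/x]$. Traces and closure. The trace relation $\rightarrow_C$: $\phi_0\odot\phi_1\rightarrow_C\phi_i$ for $\odot\in\{\land,\lor\}$, $i\in\{0,1\}$;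 $\heartsuit\phi\rightarrow_C\phi$ for $\heartsuit\in\{\Diamond,\Box\}$; $\eta x.\phi\rightarrow_C\phi[\eta x.\phi/x]$; atomic formulas have no successors. $\twoheadrightarrow_C$ is the reflexive transitive closure of $\rightarrow_C$, $\mathrm{Clos}(\phi)=\{\psi\mid\phi\twoheadrightarrow_C\psi\}$ (a finite set), and a trace is a finite or infinite sequence of formulas with consecutive members related by $\rightarrow_C$. Write $\phi\equiv_C\psi$ iff $\phi\twoheadrightarrow_C\psi$ and $\psi\twoheadrightarrow_C\phi$; its equivalence classes are (closure) clusters, and $C(\phi)$ is the cluster of $\phi$. Free subformulas. $\phi\trianglelefteq_f\psi$ iff $\psi=\chi[\phi/y]$ for some formula $\chi$ and variable $y$ with $y\in\mathrm{FV}(\chi)$ and $\phi$ free for $y$ in $\chi$. Closure order. For a formula $\psi$, write $\rho\twoheadrightarrow_C^{\psi}\sigma$ iff there is a trace $\rho=\chi_0\rightarrow_C\cdots\rightarrow_C\chi_n=\sigma$ ($n\ge0$) with $\psi\trianglelefteq_f\chi_i$ for all $i\le n$. For fixpoint formulas $\phi,\psi$: $\phi\sqsubseteq_C\psi$ iff $\psi\twoheadrightarrow_C^{\psi}\phi$; $\phi\sqsubset_C\psi$ iff $\phi\sqsubseteq_C\psi$ and $\psi\not\sqsubseteq_C\phi$. Chains. An alternating $\sqsubset_C$-chain of length $n$ is a sequence $\eta_1x_1.\chi_1,\dots,\eta_nx_n.\chi_n$ of tidy fixpoint formulas with $\eta_ix_i.\chi_i\sqsubset_C\eta_{i+1}x_{i+1}.\chi_{i+1}$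 and $\eta_{i+1}=\bar\eta_i$ for all $i<n$; it starts at the first and leads up to the last formula. For a tidy fixpoint formula $\xi$, $h^\uparrow(\xi)$ is the maximal length of an alternating $\sqsubset_C$-chain starting at $\xi$. For a cluster $C$, $\mathit{cd}(C)$ is the maximal length of an alternating $\sqsubset_C$-chain inside $C$. Global priority map. For a tidy fixpoint formula $\psi=\eta y.\phi$ let $d=\mathit{cd}(C(\psi))-h^\uparrow(\psi)$ and set $\Omega_g(\psi)=d$ if $d$ has parity $\eta$ and $\Omega_g(\psi)=d+1$ otherwise; $\Omega_g$ is undefined on non-fixpoint formulas. *)

(* Defs.v *)
From Stdlib Require Import Arith List ZArith Relations ClassicalEpsilon.
Import ListNotations.

Inductive fptype := mu | nu.
Definition flip (e : fptype) : fptype := match e with mu => nu | nu => mu end.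

Inductive form : Type :=
| Top | Bot
| PLit (p : nat) | NLit (p : nat)
| Var (x : nat)
| And (a b : form) | Or (a b : form)
| Dia (a : form) | Box (a : form)
| Fp (e : fptype) (x : nat) (a : form).

Fixpoint fv (f : form) : list nat :=
  match f with
  | Var x => [x]
  | And a b | Or a b => fv a ++ fv b
  | Dia a | Box a => fv a
  | Fp _ x a => filter (fun z => negb (Nat.eqb z x)) (fv a)
  | _ => []
  end.

Fixpoint bv (f : form) : list nat :=
  match f with
  | And a b | Or a b => bv a ++ bv b
  | Dia a | Box a => bv a
  | Fp _ x a => x :: bv a
  | _ => []
  end.

Definition tidy (f : form) : Prop := forall x, In x (fv f) -> ~ In x (bv f).

Definition isfix (f : form) : Prop := exists e x a, f = Fp e x a.

(* subst chi xi x  =  chi[xi/x] : replace every free occurrence of x in chi by xi *)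
Fixpoint subst (chi xi : form) (x : nat) : form :=
  match chi with
  | Var y => if Nat.eqb y x then xi else Var y
  | And a b => And (subst a xi x) (subst b xi x)
  | Or a b => Or (subst a xi x) (subst b xi x)
  | Dia a => Dia (subst a xi x)
  | Box a => Box (subst a xi x)
  | Fp e y a => if Nat.eqb y x then Fp e y a else Fp e y (subst a xi x)
  | f => f
  end.

(* xi is free for y in chi: no free variable of xi gets bound in chi[xi/y] *)
Fixpoint freefor (xi : form) (y : nat) (chi : form) : Prop :=
  match chi with
  | And a b | Or a b => freefor xi y a /\ freefor xi y b
  | Dia a | Box a => freefor xi y a
  | Fp _ z a => z = y \/ ((~ In y (fv a) \/ ~ In z (fv xi)) /\ freefor xi y a)
  | _ => True
  end.

Inductive step : form -> form -> Prop :=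
| st_andl a b : step (And a b) a
| st_andr a b : step (And a b) b
| st_orl a b : step (Or a b) a
| st_orr a b : step (Or a b) b
| st_dia a : step (Dia a) a
| st_box a : step (Box a) a
| st_fp e x a : step (Fp e x a) (subst a (Fp e x a) x).

Definition steps : form -> form -> Prop := clos_refl_trans form step.

Definition clos_eq (phi psi : form) : Prop := steps phi psi /\ steps psi phi.

Definition fsub (phi psi : form) : Prop :=
  exists chi y, psi = subst chi phi y /\ In y (fv chi) /\ freefor phi y chi.

Inductive steps_in (psi : form) : form -> form -> Prop :=
| si_refl rho : fsub psi rho -> steps_in psi rho rho
| si_step rho chi sigma : fsub psi rho -> step rho chi -> steps_in psi chi sigma ->
    steps_in psi rho sigma.

Definition sqle (phi psi : form) : Prop := isfix phi /\ isfix psi /\ steps_in psi psi phi.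
Definition sqlt (phi psi : form) : Prop := sqle phi psi /\ ~ sqle psi phi.

Definition alternates (a b : form) : Prop :=
  exists e x y c d, a = Fp e x c /\ b = Fp (flip e) y d.

Fixpoint chain_rel (l : list form) : Prop :=
  match l with
  | a :: ((b :: _) as t) => sqlt a b /\ alternates a b /\ chain_rel t
  | _ => True
  end.

Definition alt_chain (l : list form) : Prop :=
  Forall (fun f => tidy f /\ isfix f) l /\ chain_rel l.

(* maximum of a set of naturals / integers (classical choice; the paper's
   maxima are well defined) *)
Definition natmax (P : nat -> Prop) : nat :=
  epsilon (inhabits 0) (fun n => P n /\ forall m, P m -> m <= n).
Definition zmax (P : Z -> Prop) : Z :=
  epsilon (inhabits 0%Z) (fun n => P n /\ forall m, P m -> (m <= n)%Z).

Definition hup (xi : form) : nat :=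
  natmax (fun n => exists l, alt_chain l /\ length l = n /\ hd_error l = Some xi).

(* cd(C(psi)) : the cluster is represented by any of its members psi *)
Definition cd (psi : form) : nat :=
  natmax (fun n => exists l, alt_chain l /\ length l = n /\ Forall (fun f => clos_eq f psi) l).

Definition is_nu (e : fptype) : bool := match e with nu => true | mu => false end.

(* global priority map (junk value 0 on non-fixpoint formulas, where it is undefined) *)
Definition Omega_g (psi : form) : Z :=
  match psi with
  | Fp e _ _ =>
      let d := (Z.of_nat (cd psi) - Z.of_nat (hup psi))%Z in
      if Bool.eqb (Z.even d) (is_nu e) then d else (d + 1)%Z
  | _ => 0%Z
  end.

Definition inf_often (tau : nat -> form) (phi : form) : Prop :=
  forall N, exists n, N <= n /\ tau n = phi.

Definition is_trace (tau : nat -> form) : Prop := forall n, step (tau n) (tau (S n)).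

(* Main.v *)
Require Import Defs.
From Stdlib Require Import Arith ZArith Lia List Relations Classical FunctionalExtensionality PropExtensionality ClassicalEpsilon.
Import ListNotations.

Lemma in_filt y x l : In y (filter (fun z => negb (Nat.eqb z x)) l) <-> In y l /\ y <> x.
Proof. rewrite filter_In, Bool.negb_true_iff, Nat.eqb_neq. tauto. Qed.

Lemma subst_nofv t F y : ~ In y (fv t) -> subst t F y = t.
Proof.
  induction t; simpl; intros H; auto.
  - destruct (Nat.eqb x y) eqn:E; auto. apply Nat.eqb_eq in E; subst; tauto.
  - rewrite IHt1, IHt2; auto; intro; apply H; apply in_or_app; auto.
  - rewrite IHt1, IHt2; auto; intro; apply H; apply in_or_app; auto.
  - rewrite IHt; auto.
  - rewrite IHt; auto.
  - destruct (Nat.eqb x y) eqn:E; auto. apply Nat.eqb_neq in E.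
    rewrite IHt; auto. intro; apply H; apply in_filt; auto.
Qed.

Lemma freefor_nofv t F y : ~ In y (fv t) -> freefor F y t.
Proof.
  induction t; simpl; intros H; auto;
  try (split; [apply IHt1|apply IHt2]; intro; apply H; apply in_or_app; auto).
  destruct (Nat.eq_dec x y); auto. right. assert (~ In y (fv t)).
  { intro; apply H; apply in_filt; auto. } auto.
Qed.

Fixpoint size (f : form) : nat :=
  match f with
  | And a b | Or a b => S (size a + size b)
  | Dia a | Box a | Fp _ _ a => S (size a)
  | _ => 1
  end.

Lemma size_pos f : 1 <= size f.
Proof. destruct f; simpl; lia. Qed.

Inductive occ (A : form) : form -> Prop :=
| occ_refl : occ A A
| occ_andl a b : occ A a -> occ A (And a b)
| occ_andr a b : occ A b -> occ A (And a b)
| occ_orl a b : occ A a -> occ A (Or a b)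
| occ_orr a b : occ A b -> occ A (Or a b)
| occ_dia a : occ A a -> occ A (Dia a)
| occ_box a : occ A a -> occ A (Box a)
| occ_fp e z a : occ A a -> ~ In z (fv A) -> occ A (Fp e z a).

Lemma occ_fv A B : occ A B -> forall x, In x (fv A) -> In x (fv B).
Proof.
  induction 1; simpl; intros; auto; try (apply in_or_app; auto).
  apply in_filt. split; auto. intro; subst; tauto.
Qed.

Lemma occ_trans A B C : occ A B -> occ B C -> occ A C.
Proof.
  intros HAB H; induction H; try (constructor; auto; fail); auto.
  constructor; auto. intro Hz. apply H0. eapply occ_fv; eauto.
Qed.

Lemma occ_size A B : occ A B -> A = B \/ size A < size B.
Proof.
  induction 1; auto; right; simpl; destruct IHocc; subst; lia.
Qed.

Lemma fsub_occ A B : fsub A B -> occ A B.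
Proof.
  intros (chi & y & -> & Hin & Hff). revert Hin Hff.
  induction chi; simpl; intros Hin Hff; try contradiction.
  - destruct Hin as [<-|[]]. rewrite Nat.eqb_refl. constructor.
  - destruct Hff. apply in_app_or in Hin as [];[apply occ_andl|apply occ_andr]; auto.
  - destruct Hff. apply in_app_or in Hin as [];[apply occ_orl|apply occ_orr]; auto.
  - constructor; auto.
  - constructor; auto.
  - apply in_filt in Hin as [Hin Hne].
    destruct (Nat.eqb x y) eqn:E. apply Nat.eqb_eq in E; congruence.
    destruct Hff as [->|[[H|H] Hf]]; try congruence; try contradiction.
    constructor; auto.
Qed.

Definition fresh (f : form) : nat := S (fold_right max 0 (fv f ++ bv f)).

Lemma fold_max_ge l x : In x l -> x <= fold_right max 0 l.
Proof. induction l; simpl; intros []; subst; try lia. specialize (IHl H); lia. Qed.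

Lemma fresh_fv f : ~ In (fresh f) (fv f).
Proof. intro H. assert (In (fresh f) (fv f ++ bv f)) by (apply in_or_app; auto).
  apply fold_max_ge in H0. unfold fresh in H0. lia. Qed.
Lemma fresh_bv f : ~ In (fresh f) (bv f).
Proof. intro H. assert (In (fresh f) (fv f ++ bv f)) by (apply in_or_app; auto).
  apply fold_max_ge in H0. unfold fresh in H0. lia. Qed.

Lemma notin_app_l {y : nat} {l1 l2} : ~ In y (l1 ++ l2) -> ~ In y l1.
Proof. intros H ?; apply H, in_or_app; auto. Qed.
Lemma notin_app_r {y : nat} {l1 l2} : ~ In y (l1 ++ l2) -> ~ In y l2.
Proof. intros H ?; apply H, in_or_app; auto. Qed.

Lemma occ_fsub_gen A B : occ A B -> forall y, ~ In y (fv B) -> ~ In y (bv B) ->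
  exists chi, B = subst chi A y /\ In y (fv chi) /\ freefor A y chi.
Proof.
  induction 1; simpl; intros y Hf Hb.
  - exists (Var y). simpl. rewrite Nat.eqb_refl. auto.
  - destruct (IHocc y (notin_app_l Hf) (notin_app_l Hb)) as (c & -> & ? & ?).
    exists (And c b); simpl; rewrite (subst_nofv b); [|exact (notin_app_r Hf)].
    repeat split; auto. apply in_or_app; auto. apply freefor_nofv. exact (notin_app_r Hf).
  - destruct (IHocc y (notin_app_r Hf) (notin_app_r Hb)) as (c & -> & ? & ?).
    exists (And a c); simpl; rewrite (subst_nofv a); [|exact (notin_app_l Hf)].
    repeat split; auto. apply in_or_app; auto. apply freefor_nofv. exact (notin_app_l Hf).
  - destruct (IHocc y (notin_app_l Hf) (notin_app_l Hb)) as (c & -> & ? & ?).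
    exists (Or c b); simpl; rewrite (subst_nofv b); [|exact (notin_app_r Hf)].
    repeat split; auto. apply in_or_app; auto. apply freefor_nofv. exact (notin_app_r Hf).
  - destruct (IHocc y (notin_app_r Hf) (notin_app_r Hb)) as (c & -> & ? & ?).
    exists (Or a c); simpl; rewrite (subst_nofv a); [|exact (notin_app_l Hf)].
    repeat split; auto. apply in_or_app; auto. apply freefor_nofv. exact (notin_app_l Hf).
  - destruct (IHocc y) as (c & -> & ? & ?); auto. exists (Dia c); simpl; auto.
  - destruct (IHocc y) as (c & -> & ? & ?); auto. exists (Box c); simpl; auto.
  - assert (z <> y) by (intro; subst; apply Hb; left; auto).
    assert (~ In y (fv a)) by (intro; apply Hf; apply in_filt; auto).
    destruct (IHocc y) as (c & -> & ? & ?); auto.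
    exists (Fp e z c); simpl. rewrite (proj2 (Nat.eqb_neq z y) H1).
    split; auto. split. apply in_filt; auto. right; auto.
Qed.

Lemma occ_fsub A B : occ A B -> fsub A B.
Proof.
  intros H. destruct (occ_fsub_gen A B H (fresh B) (fresh_fv B) (fresh_bv B)) as (c & ? & ? & ?).
  exists c, (fresh B); auto.
Qed.

Lemma fsub_eq A B : fsub A B -> fsub B A -> A = B.
Proof.
  intros H1 H2; apply fsub_occ in H1, H2. apply occ_size in H1, H2.
  destruct H1; auto. destruct H2; auto. lia.
Qed.

Lemma fsub_trans A B C : fsub A B -> fsub B C -> fsub A C.
Proof. intros; apply occ_fsub; eapply occ_trans; apply fsub_occ; eauto. Qed.

Lemma steps_in_last p r s : steps_in p r s -> fsub p s.
Proof. induction 1; auto. Qed.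

Lemma steps_in_lift A B u C : fsub A B -> steps_in B u C -> steps_in A u C.
Proof.
  intros HAB; induction 1.
  - constructor. eapply fsub_trans; eauto.
  - econstructor; eauto. eapply fsub_trans; eauto.
Qed.

Lemma steps_in_trans A r B C : steps_in A r B -> steps_in B B C -> steps_in A r C.
Proof.
  induction 1; intros.
  - eapply steps_in_lift; eauto.
  - econstructor; eauto.
Qed.

Lemma size_subst_le c F z : In z (fv c) -> size F <= size (subst c F z).
Proof.
  induction c; simpl; intros H; try contradiction.
  - destruct H as [<-|[]]. rewrite Nat.eqb_refl; lia.
  - apply in_app_or in H as []; [specialize (IHc1 H)|specialize (IHc2 H)]; lia.
  - apply in_app_or in H as []; [specialize (IHc1 H)|specialize (IHc2 H)]; lia.
  - specialize (IHc H); lia.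
  - specialize (IHc H); lia.
  - apply in_filt in H as [H Hn]. rewrite (proj2 (Nat.eqb_neq x z) (not_eq_sym Hn)).
    simpl. specialize (IHc H); lia.
Qed.

Lemma size_subst_lt c F z : In z (fv c) -> c <> Var z -> size F < size (subst c F z).
Proof.
  destruct c; simpl; intros H Hn; try contradiction.
  - destruct H as [<-|[]]. congruence.
  - apply in_app_or in H as []; [pose proof (size_subst_le c1 F z H)|pose proof (size_subst_le c2 F z H)]; lia.
  - apply in_app_or in H as []; [pose proof (size_subst_le c1 F z H)|pose proof (size_subst_le c2 F z H)]; lia.
  - pose proof (size_subst_le c F z H); lia.
  - pose proof (size_subst_le c F z H); lia.
  - apply in_filt in H as [H Hn']. rewrite (proj2 (Nat.eqb_neq x z) (not_eq_sym Hn')).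
    simpl. pose proof (size_subst_le c F z H); lia.
Qed.

Lemma occ_subst_inv X a F z : occ X (subst a F z) ->
  occ X F \/ (occ X a /\ ~ In z (fv X)) \/
  (exists c, X = subst c F z /\ In z (fv c) /\ c <> Var z).
Proof.
  assert (Hwhole : forall a, X = subst a F z -> a <> Var z ->
     (occ X a /\ ~ In z (fv X)) \/ (exists c, X = subst c F z /\ In z (fv c) /\ c <> Var z)).
  { intros a0 -> Hn. destruct (in_dec Nat.eq_dec z (fv a0)).
    - right; eauto.
    - left. rewrite subst_nofv; auto. split; [constructor|auto]. }
  induction a; simpl; intros H.
  - inversion H; subst. right. left. split. constructor. simpl; auto.
  - inversion H; subst. right. left. split. constructor. simpl; auto.
  - inversion H; subst. right. left. split. constructor. simpl; auto.
  - inversion H; subst. right. left. split. constructor. simpl; auto.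
  - destruct (Nat.eqb x z) eqn:E. auto.
    inversion H; subst. right. left. split. constructor. simpl. intros [->|[]].
    rewrite Nat.eqb_refl in E; discriminate.
  - inversion H; subst.
    + right. apply (Hwhole (And a1 a2)); simpl; auto. discriminate.
    + destruct (IHa1 H1) as [?|[[? ?]|?]]; auto. right; left; split; auto. constructor; auto.
    + destruct (IHa2 H1) as [?|[[? ?]|?]]; auto. right; left; split; auto. apply occ_andr; auto.
  - inversion H; subst.
    + right. apply (Hwhole (Or a1 a2)); simpl; auto. discriminate.
    + destruct (IHa1 H1) as [?|[[? ?]|?]]; auto. right; left; split; auto. constructor; auto.
    + destruct (IHa2 H1) as [?|[[? ?]|?]]; auto. right; left; split; auto. apply occ_orr; auto.
  - inversion H; subst.
    + right. apply (Hwhole (Dia a)); simpl; auto. discriminate.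
    + destruct (IHa H1) as [?|[[? ?]|?]]; auto. right; left; split; auto. constructor; auto.
  - inversion H; subst.
    + right. apply (Hwhole (Box a)); simpl; auto. discriminate.
    + destruct (IHa H1) as [?|[[? ?]|?]]; auto. right; left; split; auto. constructor; auto.
  - destruct (Nat.eqb x z) eqn:E.
    + apply Nat.eqb_eq in E; subst. right. left. split; auto.
      inversion H; subst; simpl. rewrite in_filt; tauto. auto.
    + inversion H; subst.
      * right. apply (Hwhole (Fp e x a)); simpl; [rewrite E; auto|discriminate].
      * destruct (IHa H2) as [?|[[? ?]|?]]; auto. right; left; split; auto. constructor; auto.
Qed.
Fixpoint lookup (y : nat) (env : list (nat * form)) : option form :=
  match env with
  | [] => None
  | (z, G) :: r => if Nat.eqb y z then Some G else lookup y r
  end.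

Definition rm (x : nat) (env : list (nat * form)) :=
  filter (fun p => negb (Nat.eqb (fst p) x)) env.

Fixpoint eval (f : form) (env : list (nat * form)) : form :=
  match f with
  | Var y => match lookup y env with Some G => G | None => Var y end
  | And a b => And (eval a env) (eval b env)
  | Or a b => Or (eval a env) (eval b env)
  | Dia a => Dia (eval a env)
  | Box a => Box (eval a env)
  | Fp e x a => Fp e x (eval a (rm x env))
  | _ => f
  end.

Fixpoint Cl (f : form) (env : list (nat * form)) : list form :=
  eval f env ::
  match f with
  | And a b | Or a b => Cl a env ++ Cl b env
  | Dia a | Box a => Cl a env
  | Fp e x a => Cl a ((x, Fp e x (eval a (rm x env))) :: env)
  | _ => []
  end.

Lemma lookup_in y env G : lookup y env = Some G -> In (y, G) env.
Proof.
  induction env as [|[z H] r IH]; simpl; try discriminate.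
  destruct (Nat.eqb y z) eqn:E; intros.
  - inversion H0; subst. apply Nat.eqb_eq in E; subst; auto.
  - auto.
Qed.

Lemma lookup_none y env : lookup y env = None -> ~ In y (map fst env).
Proof.
  induction env as [|[z H] r IH]; simpl; auto.
  destruct (Nat.eqb y z) eqn:E; intros; try discriminate.
  apply Nat.eqb_neq in E. intros [->|?]; auto. apply IH; auto.
Qed.

Lemma lookup_rm_same x env : lookup x (rm x env) = None.
Proof.
  induction env as [|[z H] r IH]; simpl; auto.
  destruct (Nat.eqb z x) eqn:E; simpl; auto.
  rewrite Nat.eqb_sym, E; auto.
Qed.

Lemma lookup_rm_other x y env : y <> x -> lookup y (rm x env) = lookup y env.
Proof.
  intros Hn; induction env as [|[z H] r IH]; simpl; auto.
  destruct (Nat.eqb z x) eqn:E; simpl.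
  - apply Nat.eqb_eq in E; subst. rewrite (proj2 (Nat.eqb_neq y x) Hn); auto.
  - rewrite IH; auto.
Qed.

Lemma rm_in x env y G : In (y, G) (rm x env) -> In (y, G) env /\ y <> x.
Proof. unfold rm; rewrite filter_In; simpl. rewrite Bool.negb_true_iff, Nat.eqb_neq. auto. Qed.

Lemma rm_idem x env : rm x (rm x env) = rm x env.
Proof.
  induction env as [|[z H] r IH]; simpl; auto.
  destruct (Nat.eqb z x) eqn:E; simpl; auto. rewrite E; simpl. f_equal; auto.
Qed.

Lemma rm_comm x y env : rm x (rm y env) = rm y (rm x env).
Proof.
  induction env as [|[z H] r IH]; simpl; auto.
  destruct (Nat.eqb z y) eqn:E1; destruct (Nat.eqb z x) eqn:E2; simpl;
    try rewrite E1; try rewrite E2; simpl; try rewrite IH; auto.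
Qed.

Lemma rm_cons_same x F env : rm x ((x, F) :: env) = rm x env.
Proof. unfold rm; simpl. rewrite Nat.eqb_refl; simpl; auto. Qed.

Lemma rm_cons_other x z F env : z <> x -> rm z ((x, F) :: env) = (x, F) :: rm z env.
Proof. intros H; unfold rm; simpl. rewrite (proj2 (Nat.eqb_neq x z)); auto. Qed.

Lemma subst_eval a : forall env x F, (forall y G, In (y, G) env -> ~ In x (fv G)) ->
  subst (eval a (rm x env)) F x = eval a ((x, F) :: env).
Proof.
  induction a; intros env y F Henv; simpl; auto;
    try (f_equal; auto; fail).
  - destruct (Nat.eq_dec x y).
    + subst. rewrite lookup_rm_same, Nat.eqb_refl. simpl. rewrite Nat.eqb_refl; auto.
    + rewrite lookup_rm_other by auto. rewrite (proj2 (Nat.eqb_neq x y) n).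
      destruct (lookup x env) eqn:E.
      * apply subst_nofv. apply lookup_in in E. eapply Henv; eauto.
      * simpl. rewrite (proj2 (Nat.eqb_neq x y) n); auto.
  - destruct (Nat.eqb x y) eqn:E.
    + apply Nat.eqb_eq in E; subst. rewrite Nat.eqb_refl; simpl. rewrite rm_idem; auto.
    + apply Nat.eqb_neq in E. replace (y =? x) with false by (symmetry; apply Nat.eqb_neq; auto).
      simpl. f_equal.
      rewrite rm_comm. apply IHa. intros z G HG; apply rm_in in HG as [HG _]. eauto.
Qed.

Lemma fv_eval f : forall env z, In z (fv (eval f env)) ->
  (In z (fv f) /\ ~ In z (map fst env)) \/ (exists y G, In (y, G) env /\ In z (fv G)).
Proof.
  induction f; intros env z; simpl; try tauto;
    try (intros H; apply in_app_or in H as [H|H];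
         [destruct (IHf1 env z H) as [[? ?]|?]; auto; left; split; auto; apply in_or_app; auto
         |destruct (IHf2 env z H) as [[? ?]|?]; auto; left; split; auto; apply in_or_app; auto]; fail);
    try (intros H; destruct (IHf env z H) as [[? ?]|?]; auto; fail).
  - destruct (lookup x env) eqn:E; intros H.
    + right. exists x, f. split; auto. apply lookup_in; auto.
    + left. simpl in H. destruct H as [<-|[]]. split; auto. apply lookup_none; auto.
  - intros H. rewrite in_filt in H. destruct H as [H Hn].
    destruct (IHf _ _ H) as [[H1 H2]|(y & G & HG & Hz)].
    + left. split. apply in_filt; auto. intros Hm. apply H2.
      apply in_map_iff in Hm as ([w G] & Hw & HG). simpl in Hw; subst.
      apply in_map_iff. exists (z, G); split; auto. unfold rm; apply filter_In; split; auto.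
      simpl. apply Bool.negb_true_iff, Nat.eqb_neq; auto.
    + right. apply rm_in in HG as [HG _]. eauto.
Qed.

Definition Inv (f : form) (env : list (nat * form)) : Prop :=
  forall z, In z (bv f) -> (forall y G, In (y, G) env -> ~ In z (fv G)) /\
                            (In z (fv f) -> In z (map fst env)).

Lemma Cl_closed f : forall env, Inv f env -> forall rho sigma, In rho (Cl f env) -> step rho sigma ->
  In sigma (Cl f env) \/ exists y, lookup y env = Some rho.
Proof.
  induction f; intros env Hinv rho sigma Hin Hst; simpl in Hin |- *;
  try (destruct Hin as [<-|[]]; inversion Hst; fail).
  - destruct Hin as [<-|[]]. destruct (lookup x env) eqn:E.
    + right; eauto.
    + inversion Hst.
  - assert (I1 : Inv f1 env).
    { intros z Hz. destruct (Hinv z) as [? ?]. simpl; apply in_or_app; auto. split; auto.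
      intros; apply H0; apply in_or_app; auto. }
    assert (I2 : Inv f2 env).
    { intros z Hz. destruct (Hinv z) as [? ?]. simpl; apply in_or_app; auto. split; auto.
      intros; apply H0; apply in_or_app; auto. }
    destruct Hin as [<-|Hin].
    + inversion Hst; subst; left; right; apply in_or_app; [left|right]; destruct f1; destruct f2; simpl; auto.
    + apply in_app_or in Hin as [Hin|Hin].
      * destruct (IHf1 env I1 rho sigma Hin Hst) as [?|?]; auto. left; right; apply in_or_app; auto.
      * destruct (IHf2 env I2 rho sigma Hin Hst) as [?|?]; auto. left; right; apply in_or_app; auto.
  - assert (I1 : Inv f1 env).
    { intros z Hz. destruct (Hinv z) as [? ?]. simpl; apply in_or_app; auto. split; auto.
      intros; apply H0; apply in_or_app; auto. }
    assert (I2 : Inv f2 env).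
    { intros z Hz. destruct (Hinv z) as [? ?]. simpl; apply in_or_app; auto. split; auto.
      intros; apply H0; apply in_or_app; auto. }
    destruct Hin as [<-|Hin].
    + inversion Hst; subst; left; right; apply in_or_app; [left|right]; destruct f1; destruct f2; simpl; auto.
    + apply in_app_or in Hin as [Hin|Hin].
      * destruct (IHf1 env I1 rho sigma Hin Hst) as [?|?]; auto. left; right; apply in_or_app; auto.
      * destruct (IHf2 env I2 rho sigma Hin Hst) as [?|?]; auto. left; right; apply in_or_app; auto.
  - destruct Hin as [<-|Hin].
    + inversion Hst; subst; left; right; destruct f; simpl; auto.
    + destruct (IHf env Hinv rho sigma Hin Hst) as [?|?]; auto.
  - destruct Hin as [<-|Hin].
    + inversion Hst; subst; left; right; destruct f; simpl; auto.
    + destruct (IHf env Hinv rho sigma Hin Hst) as [?|?]; auto.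
  - set (F := Fp e x (eval f (rm x env))).
    assert (Hx : forall y G, In (y, G) env -> ~ In x (fv G)).
    { apply (Hinv x); simpl; auto. }
    assert (Hsucc : forall s, step F s -> s = eval f ((x, F) :: env)).
    { intros s Hs. inversion Hs; subst. apply subst_eval; auto. }
    assert (I1 : Inv f ((x, F) :: env)).
    { intros z Hz. destruct (Hinv z) as [Ha Hb]. simpl; auto. split.
      - intros y G [HG|HG].
        + injection HG as Hy HG'; subst y G. intros Hf. unfold F in Hf.
          change (Fp e x (eval f (rm x env))) with (eval (Fp e x f) env) in Hf.
          destruct (fv_eval _ _ _ Hf) as [[H1 H2]|(y' & G' & HG' & Hz')].
          * apply H2, Hb, H1.
          * eapply Ha; eauto.
        + eauto.
      - intros Hzf. simpl. destruct (Nat.eq_dec x z); auto. right. apply Hb. apply in_filt; auto. }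
    destruct Hin as [<-|Hin].
    + left; right. rewrite (Hsucc _ Hst). destruct f; simpl; auto.
    + destruct (IHf _ I1 rho sigma Hin Hst) as [?|[y Hy]]; auto.
      simpl in Hy. destruct (Nat.eqb y x).
      * inversion Hy; subst. left; right. rewrite (Hsucc _ Hst). destruct f; simpl; auto.
      * right; eauto.
Qed.

Lemma eval_nil f : eval f [] = f.
Proof. induction f; simpl; try f_equal; auto. Qed.
Lemma Cl_head f env : In (eval f env) (Cl f env).
Proof. destruct f; simpl; left; auto. Qed.

Section Tr.
Variable tau : nat -> form.
Hypothesis Htr : is_trace tau.

Lemma trace_in_Cl : tidy (tau 0) -> forall n, In (tau n) (Cl (tau 0) []).
Proof.
  intros Ht. assert (I : Inv (tau 0) []).
  { intros z Hz. split. intros y G []. intros Hf. exfalso; exact (Ht z Hf Hz). }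
  induction n.
  - pose proof (Cl_head (tau 0) []) as H; rewrite eval_nil in H; exact H.
  - destruct (Cl_closed _ _ I _ _ IHn (Htr n)) as [?|[y Hy]]; auto. discriminate.
Qed.

Lemma eventually_inf : forall L, exists N, forall n, N <= n -> In (tau n) L -> inf_often tau (tau n).
Proof.
  induction L as [|G L [N IH]].
  - exists 0; intros n _ [].
  - destruct (classic (inf_often tau G)) as [Hi|Hi].
    + exists N; intros n Hn [<-|Hin]; auto.
    + unfold inf_often in Hi. apply not_all_ex_not in Hi as [B HB].
      exists (max N B). intros n Hn [Hg|Hin].
      * exfalso; apply HB; exists n; split; [lia|auto].
      * apply IH; auto; lia.
Qed.

Lemma step_size r s : step r s -> ~ isfix r -> size s < size r.
Proof.
  intros H Hn; destruct H; simpl; try lia. exfalso; apply Hn; do 3 eexists; eauto.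
Qed.

Lemma fix_after N : exists n, N <= n /\ isfix (tau n).
Proof.
  apply NNPP; intros Hno.
  assert (forall k, size (tau (N + k)) + k <= size (tau N)).
  { induction k. replace (N + 0) with N by lia; lia.
    assert (~ isfix (tau (N + k))) by (intro; apply Hno; exists (N + k); split; [lia|auto]).
    pose proof (step_size _ _ (Htr (N + k)) H). replace (N + S k) with (S (N + k)) by lia. lia. }
  specialize (H (S (size (tau N)))). lia.
Qed.

Lemma trace_steps i d : steps (tau i) (tau (i + d)).
Proof.
  induction d. rewrite Nat.add_0_r; apply rt_refl.
  eapply rt_trans; eauto. rewrite Nat.add_succ_r. apply rt_step, Htr.
Qed.

Lemma trace_steps' i j : i <= j -> steps (tau i) (tau j).
Proof. intros; replace j with (i + (j - i)) by lia; apply trace_steps. Qed.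

End Tr.

Lemma min_exists (P : nat -> Prop) : (exists n, P n) -> exists n, P n /\ forall m, P m -> n <= m.
Proof.
  intros [n Hn]. apply NNPP; intros Hno.
  assert (forall k, forall m, m <= k -> ~ P m).
  { induction k; intros m Hm HP; apply Hno; exists m; split; auto; intros m' HP'.
    - lia.
    - destruct (Nat.le_gt_cases m m'); auto. exfalso; apply (IHk m'); auto; lia. }
  exact (H n n (le_n n) Hn).
Qed.

Lemma max_exists (P : nat -> Prop) B : (exists n, P n) -> (forall n, P n -> n <= B) ->
  exists n, P n /\ forall m, P m -> m <= n.
Proof.
  revert P; induction B; intros P [n Hn] Hb.
  - exists n; split; auto; intros m Hm; pose proof (Hb m Hm); pose proof (Hb n Hn); lia.
  - destruct (classic (P (S B))).
    + exists (S B); split; auto.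
    + apply IHB; eauto. intros m Hm. specialize (Hb m Hm). destruct (Nat.eq_dec m (S B)); subst; try tauto; lia.
Qed.

Lemma natmax_spec (P : nat -> Prop) B : (exists n, P n) -> (forall n, P n -> n <= B) ->
  P (natmax P) /\ forall m, P m -> m <= natmax P.
Proof.
  intros H1 H2. unfold natmax. apply epsilon_spec. apply (max_exists P B); auto.
Qed.

Lemma find_switch (P : nat -> Prop) : forall d k, ~ P k -> P (k + S d) -> exists j, k <= j /\ ~ P j /\ P (S j).
Proof.
  induction d; intros k H1 H2.
  - exists k; split; auto. rewrite Nat.add_1_r in H2; auto.
  - destruct (classic (P (S k))).
    + exists k; auto.
    + destruct (IHd (S k)) as (j & ? & ? & ?); auto. rewrite Nat.add_succ_l, <- Nat.add_succ_r; auto.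
      exists j; split; auto; lia.
Qed.
Lemma exist_xi tau : is_trace tau -> tidy (tau 0) ->
  exists xi M, isfix xi /\ tau M = xi /\ inf_often tau xi /\ forall k, M <= k -> occ xi (tau k).
Proof.
  intros Htr Ht.
  destruct (eventually_inf tau (Cl (tau 0) [])) as [N0 HN0].
  assert (HF : forall n, N0 <= n -> inf_often tau (tau n)).
  { intros; apply HN0; auto; apply trace_in_Cl; auto. }
  destruct (min_exists (fun s => exists G, isfix G /\ inf_often tau G /\ size G = s)) as [s [(xi & Hfx & Hinf & <-) Hmin]].
  { destruct (fix_after tau Htr N0) as (n & Hn & Hf). exists (size (tau n)), (tau n); auto. }
  destruct (Hinf N0) as (M & HM & HMe).
  exists xi, M; repeat split; auto.
  intros k Hk. apply NNPP; intros Hno.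
  destruct (Hinf (S k)) as (k' & Hk' & Hk'e).
  destruct (find_switch (fun n => occ xi (tau n)) (k' - S k) k) as (j & Hj & Hnj & Hsj); auto.
  { replace (k + S (k' - S k)) with k' by lia. rewrite Hk'e; constructor. }
  pose proof (Htr j) as Hst.
  remember (tau j) as r eqn:Er. remember (tau (S j)) as s eqn:Es.
  destruct Hst.
  - apply Hnj; apply occ_andl; auto.
  - apply Hnj; apply occ_andr; auto.
  - apply Hnj; apply occ_orl; auto.
  - apply Hnj; apply occ_orr; auto.
  - apply Hnj; apply occ_dia; auto.
  - apply Hnj; apply occ_box; auto.
  - destruct (occ_subst_inv _ _ _ _ Hsj) as [H|[[H1 H2]|(c & Hc & Hz & Hnv)]].
    + auto.
    + apply Hnj; apply occ_fp; auto.
    + pose proof (size_subst_lt c (Fp e x a) x Hz Hnv). rewrite <- Hc in H.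
      assert (size xi <= size (Fp e x a)).
      { apply Hmin. exists (Fp e x a). split. do 3 eexists; eauto. split; auto.
        rewrite Er. apply HF. lia. }
      lia.
Qed.

Definition om (e : fptype) (d : Z) : Z := if Bool.eqb (Z.even d) (is_nu e) then d else (d + 1)%Z.

Lemma Omega_om e x a : Omega_g (Fp e x a) =
  om e (Z.of_nat (cd (Fp e x a)) - Z.of_nat (hup (Fp e x a)))%Z.
Proof. reflexivity. Qed.

Lemma om_even e d : Z.even (om e d) = is_nu e.
Proof.
  unfold om. destruct (Bool.eqb (Z.even d) (is_nu e)) eqn:E.
  - apply Bool.eqb_prop in E; auto.
  - rewrite Z.even_add. simpl. destruct (Z.even d), e; simpl in *; auto; discriminate.
Qed.

Lemma om_bounds e d : (d <= om e d <= d + 1)%Z.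
Proof. unfold om; destruct (Bool.eqb _ _); lia. Qed.

Lemma om_mono e d1 d2 : (d1 <= d2)%Z -> (om e d1 <= om e d2)%Z.
Proof.
  intros H. destruct (Z.eq_dec d1 d2). subst; lia.
  pose proof (om_bounds e d1); pose proof (om_bounds e d2); lia.
Qed.

Lemma sqle_refl a : isfix a -> sqle a a.
Proof. intros; repeat split; auto. constructor. apply occ_fsub; constructor. Qed.

Lemma sqlt_size a b : sqlt a b -> size b < size a.
Proof.
  intros [[Ha [Hb Hs]] Hn]. apply steps_in_last, fsub_occ, occ_size in Hs as [->|]; auto.
  exfalso; apply Hn; apply sqle_refl; auto.
Qed.

Lemma chain_len : forall l a, chain_rel (a :: l) -> length (a :: l) <= size a.
Proof.
  induction l; intros b H. simpl; pose proof (size_pos b); lia.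
  destruct H as [H1 [_ H3]]. specialize (IHl a H3). pose proof (sqlt_size _ _ H1).
  simpl in *; lia.
Qed.

Lemma hup_spec phi : tidy phi -> isfix phi ->
  (exists l, alt_chain l /\ length l = hup phi /\ hd_error l = Some phi) /\
  forall m l, alt_chain l -> length l = m -> hd_error l = Some phi -> m <= hup phi.
Proof.
  intros Ht Hf.
  destruct (natmax_spec (fun n => exists l, alt_chain l /\ length l = n /\ hd_error l = Some phi) (size phi)).
  - exists 1, [phi]. repeat split; simpl; auto.
  - intros n (l & [_ Hc] & <- & Hh). destruct l; simpl in Hh; try discriminate. inversion Hh; subst.
    apply chain_len; auto.
  - split; auto. intros m l H1 H2 H3. apply H0. eauto.
Qed.
Lemma zmax_eq (P : Z -> Prop) v : P v -> (forall m, P m -> (m <= v)%Z) -> zmax P = v.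
Proof.
  intros H1 H2. unfold zmax.
  destruct (epsilon_spec (inhabits 0%Z) (fun n => P n /\ forall m, P m -> (m <= n)%Z)) as [H3 H4].
  { exists v; auto. }
  apply Z.le_antisymm; auto.
Qed.

Theorem mainTheorem5 (tau : nat -> form) :
  is_trace tau -> (forall n, tidy (tau n)) ->
  exists e x chi,
    let xi := Fp e x chi in
    (inf_often tau xi /\ (exists N, forall n, N <= n -> steps_in xi xi (tau n)) /\
     (forall xi', isfix xi' -> inf_often tau xi' ->
        (exists N, forall n, N <= n -> steps_in xi' xi' (tau n)) -> xi' = xi)) /\
    (Z.even (zmax (fun z => exists phi, isfix phi /\ inf_often tau phi /\ z = Omega_g phi))
       = true <-> e = nu).
Proof.
  intros Htr Htidy.
  destruct (exist_xi tau Htr (Htidy 0)) as (xi & M & (e & x & chi & ->) & HM & Hinf & Hocc).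
  exists e, x, chi. cbv zeta.
  set (X := Fp e x chi) in *.
  assert (HfX : isfix X) by (exists e, x, chi; reflexivity).
  assert (Hsteps : forall n, M <= n -> steps_in X X (tau n)).
  { assert (H : forall d k, M <= k -> steps_in X (tau k) (tau (k + d))).
    { induction d; intros k Hk.
      - rewrite Nat.add_0_r. constructor. apply occ_fsub; auto.
      - econstructor. apply occ_fsub; auto. apply Htr.
        replace (k + S d) with (S k + d) by lia. apply IHd; lia. }
    intros n Hn. pose proof (H (n - M) M (le_n M)) as H'. rewrite HM in H'.
    replace (M + (n - M)) with n in H' by lia. exact H'. }
  assert (Huniq : forall xi', isfix xi' -> inf_often tau xi' ->
     (exists N, forall n, N <= n -> steps_in xi' xi' (tau n)) -> xi' = X).
  { intros xi' _ Hi' [N' HN']. destruct (Hi' (max N' M)) as (n1 & Hn1 & E1).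
    destruct (Hinf (max N' M)) as (n2 & Hn2 & E2).
    pose proof (steps_in_last _ _ _ (Hsteps n1 ltac:(lia))) as F1. rewrite E1 in F1.
    pose proof (steps_in_last _ _ _ (HN' n2 ltac:(lia))) as F2. rewrite E2 in F2.
    symmetry; apply fsub_eq; auto. }
  assert (Hon : forall phi, inf_often tau phi -> tidy phi /\ clos_eq phi X /\
     (isfix phi -> phi <> X -> sqlt phi X)).
  { intros phi Hp. destruct (Hp 0) as (i & _ & Ei). split. rewrite <- Ei; auto.
    destruct (Hinf i) as (j & Hj & Ej). destruct (Hp j) as (i' & Hi' & Ei').
    split. split.
    - rewrite <- Ei, <- Ej. apply trace_steps'; auto.
    - rewrite <- Ej, <- Ei'. apply trace_steps'; auto.
    - intros Hf Hne. split. split; auto. split; auto.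
      destruct (Hp M) as (n & Hn & En). rewrite <- En; auto.
      intros [_ [_ Hs]]. apply steps_in_last in Hs.
      destruct (Hp M) as (n & Hn & En). pose proof (steps_in_last _ _ _ (Hsteps n Hn)) as F.
      rewrite En in F. apply Hne. apply fsub_eq; auto. }
  assert (Hcd : forall phi, clos_eq phi X -> cd phi = cd X).
  { intros phi Hc. unfold cd. f_equal. apply functional_extensionality; intro n.
    apply propositional_extensionality.
    destruct Hc as [Hc1 Hc2].
    assert (Hi : forall f, clos_eq f phi <-> clos_eq f X).
    { intros f; split; intros [Ha Hb]; split; eapply rt_trans; eauto. }
    split; intros (l & H1 & H2 & H3); exists l; (split; [exact H1|split; [exact H2|]]);
      (eapply Forall_impl; [|exact H3]); intros f; apply Hi. }
  assert (HtX : tidy X) by (apply (Hon X Hinf)).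
  assert (Hle : forall phi, isfix phi -> inf_often tau phi -> (Omega_g phi <= Omega_g X)%Z).
  { intros phi Hf Hp. destruct (Hon phi Hp) as (Htp & Hce & Hlt).
    destruct (classic (phi = X)) as [->|Hne]. lia.
    specialize (Hlt Hf Hne).
    destruct (hup_spec X HtX HfX) as [(lX & HlX & HlenX & HhdX) _].
    destruct (hup_spec phi Htp Hf) as [_ Hmax].
    destruct lX as [|X0 rest]; simpl in HhdX; [discriminate|]. injection HhdX as ->.
    destruct Hf as (e1 & x1 & c1 & Ephi).
    assert (HOp : Omega_g phi = om e1 (Z.of_nat (cd X) - Z.of_nat (hup phi))).
    { rewrite <- (Hcd _ Hce). rewrite Ephi. reflexivity. }
    assert (HOX : Omega_g X = om e (Z.of_nat (cd X) - Z.of_nat (hup X))) by reflexivity.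
    rewrite HOp, HOX.
    destruct HlX as [HFa HCr].
    assert (Hfp : tidy phi /\ isfix phi) by (split; auto; rewrite Ephi; do 3 eexists; eauto).
    destruct (classic (e1 = e)) as [He|He].
    - subst e1.
      assert (hup X <= hup phi).
      { destruct rest as [|c2 rest'].
        + rewrite <- HlenX. apply (Hmax _ [phi]); simpl; auto. split; auto.
        + simpl in HCr. destruct HCr as (Hs & Ha & Hc).
          apply (Hmax _ (phi :: c2 :: rest')); simpl; auto.
          split. constructor; auto. inversion HFa; auto.
          split; [|split; auto].
          * destruct Hs as [[_ [Hfc2 Hs1]] Hs2]. destruct Hlt as [[_ [_ Hs3]] _].
            split. split; [apply Hfp|]. split; auto. eapply steps_in_trans; eauto.
            intros [_ [_ Hs4]]. apply steps_in_last, fsub_occ, occ_size in Hs4.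
            apply steps_in_last, fsub_occ, occ_size in Hs1.
            apply steps_in_last, fsub_occ, occ_size in Hs3.
            destruct Hs1 as [E|Hs1].
            -- subst c2. apply Hs2. apply sqle_refl; auto.
            -- destruct Hs3 as [E|Hs3]. apply Hne; auto. destruct Hs4 as [E|Hs4]. subst c2. lia. lia.
          * destruct Ha as (e' & y1 & y2 & d1 & d2 & E1 & E2). unfold X in E1. injection E1 as <- _ _.
            exists e, x1, y2, c1, d2. auto. }
      apply om_mono. lia.
    - assert (S (hup X) <= hup phi).
      { rewrite <- HlenX. apply (Hmax _ (phi :: X :: rest)); simpl; auto.
        split. constructor; auto.
        split; auto. split; auto. exists e1, x1, x, c1, chi. split; auto. unfold X.
        destruct e, e1; simpl; congruence. }
      pose proof (om_bounds e1 (Z.of_nat (cd X) - Z.of_nat (hup phi))).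
      pose proof (om_bounds e (Z.of_nat (cd X) - Z.of_nat (hup X))).
      lia. }
  assert (Hz : zmax (fun z => exists phi, isfix phi /\ inf_often tau phi /\ z = Omega_g phi) = Omega_g X).
  { apply zmax_eq.
    - exists X; repeat split; auto.
    - intros m (phi & Hf & Hp & ->). apply Hle; auto. }
  split; [split; [auto|split; [exists M; auto|auto]]|].
  rewrite Hz. unfold X; rewrite Omega_om, om_even. destruct e; simpl; split; congruence.
Qed.
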